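(* Let $\{(x_n,y_n)\}_{n=1}^k\subset(\mathbb Q\cap(0,1))\times(\mathbb Q\cap(0,1))$ with $x_m\ne x_n$ for $m\ne n$ and $y_m\ge y_n$ whenever $x_m\ge x_n$. Then there exists a binary digit vector $\vec B$ such that $F_{\vec B}(x_n)=y_n$ for all $n=1,\dots,k$.
   Context: A binary digit vector of length (scale factor) $N\ge3$ is $\vec B=(b_0,\dots,b_{N-1})\in\{0,1\}^N$ with $2\le\|\vec B\|:=\sum_i b_i\le N-1$; its digit set is $D=\{i:b_i=1\}$. With $\phi_d(x)=(x+d)/N$ for $d\in D$, let $\mu_{\vec B}$ be the unique Borel probability measure with $\mu_{\vec B}=\frac{1}{\|\vec B\|}\sum_{d\in D}\mu_{\vec B}\circ\phi_d^{-1}$, supported on the attractor $C_{\vec B}\subset[0,1]$. The CDF is $F_{\vec B}(x)=\mu_{\vec B}([0,x])$, $x\in[0,1]$. The scale factor $N$ of $\vec B$ is not prescribed. *)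

(* Defs.v *)
From HB Require Import structures.
From mathcomp Require Import all_boot all_order all_algebra.
From mathcomp Require Import all_classical all_reals all_analysis.
Set Implicit Arguments. Unset Strict Implicit. Unset Printing Implicit Defensive.
Import Order.TTheory GRing.Theory Num.Theory.
Local Open Scope ring_scope.
Local Open Scope classical_set_scope.

Definition digit_weight (N : nat) (B : 'I_N -> bool) : nat :=
  (\sum_(i < N) (B i : nat))%N.

Definition is_binary_digit_vector (N : nat) (B : 'I_N -> bool) : bool :=
  (3 <= N)%N && (2 <= digit_weight B <= N - 1)%N.

Definition phi (R : realType) (N d : nat) (x : R) : R := (x + d%:R) / N%:R.

Definition self_similar (R : realType) (N : nat) (B : 'I_N -> bool)
  (mu : probability R R) : Prop :=
  forall A : set R, measurable A ->
    (mu A = (((digit_weight B)%:R : R)^-1)%:E *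
           \sum_(d < N | B d) mu (@phi R N d @^-1` A))%E.

Definition cdfB (R : realType) (mu : probability R R) (x : R) : \bar R :=
  mu `[0, x].

(* Main.v *)
Require Import Defs.
From HB Require Import structures.
From mathcomp Require Import all_boot all_order all_algebra.
From mathcomp Require Import all_classical all_reals all_analysis.
From mathcomp Require Import lra ring zify.
#[warning="-warn-library-file-internal-analysis"]
From mathcomp Require unstable.
Import Order.TTheory GRing.Theory Num.Theory.

Module PB.
Local Open Scope classical_set_scope.
Local Open Scope ring_scope.

Section Tops.
Variable R : realType.
Variable N : nat.
Variable b : nat -> bool.
Let W : nat := (\sum_(d < N) b d)%N.
Hypothesis W2 : (2 <= W)%N.

Definition Top (g : R -> R) (t : R) : R :=
  W%:R^-1 * \sum_(d < N) (b d)%:R * g (N%:R * t - d%:R).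

Lemma W_gt0 : 0 < W%:R :> R.
Proof. by rewrite ltr0n; apply: leq_trans W2. Qed.

Lemma sumbW : \sum_(d < N) (b d)%:R = W%:R :> R.
Proof. by rewrite /W natr_sum. Qed.

Lemma Top_le_pt g t c :
  (forall d : 'I_N, b d -> g (N%:R * t - d%:R) <= c) -> Top g t <= c.
Proof.
move=> H; rewrite /Top ler_pdivrMl ?W_gt0 // -sumbW mulr_suml.
apply: ler_sum => d _; case: (boolP (b d)) => bd; last by rewrite !mul0r.
by rewrite !mul1r; apply: H.
Qed.

Lemma Top_ge_pt g t c :
  (forall d : 'I_N, b d -> c <= g (N%:R * t - d%:R)) -> c <= Top g t.
Proof.
move=> H; rewrite /Top ler_pdivlMl ?W_gt0 // -sumbW mulr_suml.
apply: ler_sum => d _; case: (boolP (b d)) => bd; last by rewrite !mul0r.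
by rewrite !mul1r; apply: H.
Qed.

Lemma Top_mono g h t : (forall s, g s <= h s) -> Top g t <= Top h t.
Proof.
move=> H; rewrite /Top ler_wpM2l ?invr_ge0 ?ler0n //.
by apply: ler_sum => d _; rewrite ler_wpM2l ?ler0n.
Qed.


Lemma N_gt0 : (0 < N)%N.
Proof.
case: (posnP N) => // N0; move: W2; rewrite /W N0 big_ord0 //.
Qed.

Lemma N_gt1 : (1 < N)%N.
Proof.
have : (W <= N)%N.
  rewrite /W -[X in (_ <= X)%N]card_ord -sum1_card.
  by apply: leq_sum => i _; case: (b i).
by move=> h; apply: leq_trans W2 h.
Qed.

Section Vals.
Variable g : R -> R.
Hypothesis hg : forall t, g t = Top g t.
Hypothesis g0 : forall t, 0 <= g t.
Hypothesis g1 : forall t, g t <= 1.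
Hypothesis gnd : forall s t, s <= t -> g s <= g t.
Hypothesis glo : forall e, 0 < e -> exists n : nat, g (- n%:R) <= e.
Hypothesis ghi : forall e, 0 < e -> exists n : nat, 1 - e <= g n%:R.

Lemma g_iter_neg k t : t <= 0 -> g t <= g (N%:R ^+ k * t).
Proof.
elim: k t => [|k IH] t t0; first by rewrite expr0 mul1r.
apply: (le_trans (IH t t0)).
rewrite [X in X <= _]hg; apply: Top_le_pt => d _.
rewrite exprS -mulrA; apply: gnd; rewrite lerBlDr lerDl ler0n //.
Qed.

Lemma g_neg t : t <= -1 -> g t = 0.
Proof.
move=> t1; apply/eqP; rewrite eq_le g0 andbT; apply/negPn/negP; rewrite -ltNge => gt.
have [n hn] := @glo _ (divr_gt0 gt (ltr0n R 2)).
have h1 : g t <= g (- n%:R).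
  have t0 : t <= 0 by lra.
  apply: le_trans (g_iter_neg n t t0) _; apply: gnd.
  have hn' : n%:R <= N%:R ^+ n :> R.
    by rewrite -natrX ler_nat ltnW // ltn_expl // N_gt1.
  have : N%:R ^+ n * t <= N%:R ^+ n * (-1) :> R.
    by rewrite ler_wpM2l // exprn_ge0 // ler0n.
  lra.
lra.
Qed.

Lemma g_zero : g 0 = 0.
Proof.
have N0 := N_gt0.
have E : W%:R * g 0 = (b 0)%:R * g 0.
  rewrite [in LHS]hg /Top mulrA mulfV ?mul1r; last by rewrite gt_eqF ?W_gt0.
  rewrite (bigD1 (Ordinal N0)) //= big1 ?addr0; first by rewrite mulr0 add0r oppr0.
  move=> i /= hi; rewrite mulr0 add0r g_neg ?mulr0 //.
  have : (1 <= i)%N by rewrite lt0n; apply: contra hi => /eqP h; apply/eqP/val_inj.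
  rewrite -(ler_nat R) => h; lra.
have Wg : 2%:R <= W%:R :> R by rewrite ler_nat.
have b1 : (b 0)%:R <= 1 :> R by case: (b 0).
have := g0 0; nra.
Qed.

Lemma g_nonpos t : t <= 0 -> g t = 0.
Proof. by move=> t0; apply/eqP; rewrite eq_le g0 andbT -g_zero gnd. Qed.

Lemma g_iter_pos k s : 0 <= s -> g (1 + N%:R ^+ k * s) <= g (1 + s).
Proof.
elim: k s => [|k IH] s s0; first by rewrite expr0 mul1r.
apply: le_trans (IH s s0).
rewrite [X in _ <= X]hg; apply: Top_ge_pt => d _.
rewrite exprS -mulrA; apply: gnd.
have : (d.+1 <= N)%N by [].
rewrite -(ler_nat R) -addn1 natrD => h; lra.
Qed.

Lemma g_ge2 t : 2 <= t -> g t = 1.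
Proof.
move=> t2; apply/eqP; rewrite eq_le g1 /=; apply/negPn/negP; rewrite -ltNge => gt.
have hlt : 0 < (1 - g t) / 2 by apply: divr_gt0 => //; lra.
have [n hn] := @ghi _ hlt.
have s0 : 0 <= t - 1 by lra.
have h1 : g n%:R <= g t.
  have := g_iter_pos n (t - 1) s0; have -> : 1 + (t - 1) = t by lra.
  apply: le_trans; apply: gnd.
  have hn' : n%:R <= N%:R ^+ n :> R.
    by rewrite -natrX ler_nat ltnW // ltn_expl // N_gt1.
  have : N%:R ^+ n * 1 <= N%:R ^+ n * (t - 1) :> R.
    by rewrite ler_wpM2l ?exprn_ge0 ?ler0n //; lra.
  lra.
lra.
Qed.

Lemma g_one : g 1 = 1.
Proof.
have N1 := N_gt1.
have N0 := N_gt0.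
have lt : (N.-1 < N)%N by rewrite prednK.
have E : W%:R * g 1 = (b N.-1)%:R * g 1 + (W%:R - (b N.-1)%:R).
  rewrite [in LHS]hg /Top mulrA mulfV ?mul1r; last by rewrite gt_eqF ?W_gt0.
  rewrite -sumbW (bigD1 (Ordinal lt)) //= [in RHS](bigD1 (Ordinal lt)) //=.
  have -> : N%:R * 1 - (N.-1)%:R = 1 :> R.
    by rewrite mulr1 -{1}(prednK N0) -addn1 natrD addrAC subrr add0r.
  rewrite addrAC subrr add0r; congr (_ + _); apply: eq_bigr => i hi.
  rewrite g_ge2 ?mulr1 //.
  have : (i < N.-1)%N.
    have : (i <= N.-1)%N by rewrite -ltnS prednK.
    by rewrite leq_eqVlt => /orP [/eqP h|//]; case/eqP: hi; apply/val_inj.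
  rewrite -ltnS prednK // => h.
  have hr : i%:R + 2 <= N%:R :> R by rewrite -natrD ler_nat addn2.
  lra.
have Wg : 2%:R <= W%:R :> R by rewrite ler_nat.
have b1 : (b N.-1)%:R <= 1 :> R by case: (b N.-1).
have := g1 1; nra.
Qed.

Lemma g_pos t : 1 <= t -> g t = 1.
Proof. by move=> t1; apply/eqP; rewrite eq_le g1 /= -{1}g_one gnd. Qed.

Lemma g_vals a : (a <= N)%N ->
  g (a%:R / N%:R) = (\sum_(d < a) b d)%N%:R / W%:R.
Proof.
move=> aN; have N0 := N_gt0.
rewrite hg /Top mulrC; congr (_ * _).
rewrite natr_sum (big_ord_widen N (fun d => (b d)%:R) aN).
rewrite [RHS]big_mkcond /=; apply: eq_bigr => d _; rewrite [N%:R * _]mulrC divfK ?pnatr_eq0 -?lt0n //.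
case: ltnP => h.
  rewrite g_pos ?mulr1 //; move: h; rewrite -(ler_nat R) -addn1 natrD => h; lra.
rewrite g_nonpos ?mulr0 //; move: h; rewrite -(ler_nat R) => h; lra.
Qed.

End Vals.

Lemma Top_le2 g h s t :
  (forall d : 'I_N, b d -> g (N%:R * s - d%:R) <= h (N%:R * t - d%:R)) ->
  Top g s <= Top h t.
Proof.
move=> H; rewrite /Top ler_wpM2l ?invr_ge0 ?ler0n //.
apply: ler_sum => d _; case: (boolP (b d)) => bd; last by rewrite !mul0r.
by rewrite !mul1r; apply: H.
Qed.

Lemma TopD g c t : Top (fun u => g u + c) t = Top g t + c.
Proof.
rewrite /Top.
under eq_bigr do rewrite mulrDr.
rewrite big_split /= -mulr_suml sumbW mulrDr mulrA mulVf ?mul1r //.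
by rewrite gt_eqF ?W_gt0.
Qed.

Definition RC (g : R -> R) := forall t e, 0 < e ->
  exists2 δ, 0 < δ & forall s, t <= s -> s < t + δ -> g s <= g t + e.

Lemma fin_delta (P : nat -> R -> Prop) k :
  (forall d δ δ', 0 < δ' -> δ' <= δ -> P d δ -> P d δ') ->
  (forall d, (d < k)%N -> exists2 δ, 0 < δ & P d δ) ->
  exists2 δ, 0 < δ & forall d, (d < k)%N -> P d δ.
Proof.
move=> Pm; elim: k => [|k IH] H; first by exists 1 => //.
have [δ1 h1 H1] := IH (fun d hd => H d (ltnW hd)).
have [δ2 h2 H2] := H k (ltnSn k).
exists (Num.min δ1 δ2); first by rewrite lt_min h1 h2.
move=> d; rewrite ltnS leq_eqVlt => /orP [/eqP ->|hd].
  by apply: (Pm k δ2) => //; [rewrite lt_min h1 h2|rewrite ge_min lexx orbT].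
by apply: (Pm d δ1) => //; [rewrite lt_min h1 h2|rewrite ge_min lexx|apply: H1].
Qed.

Lemma fin_exists_mono (P : nat -> nat -> Prop) k :
  (forall d m m', (m <= m')%N -> P d m -> P d m') ->
  (forall d, (d < k)%N -> exists m, P d m) ->
  exists m, forall d, (d < k)%N -> P d m.
Proof.
move=> Pm; elim: k => [|k IH] H; first by exists 0%N.
have [m1 H1] := IH (fun d hd => H d (ltnW hd)).
have [m2 H2] := H k (ltnSn k).
exists (maxn m1 m2) => d; rewrite ltnS leq_eqVlt => /orP [/eqP ->|hd].
  by apply: (Pm k m2) => //; rewrite leq_maxr.
by apply: (Pm d m1); [rewrite leq_maxl|apply: H1].
Qed.

Lemma Top_RC g : RC g -> RC (Top g).
Proof.
move=> rg t e e0.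
have N0 : 0 < N%:R :> R by rewrite ltr0n N_gt0.
pose P := (fun (d : nat) δ => forall u, N%:R * t - d%:R <= u -> u < N%:R * t - d%:R + δ ->
      g u <= g (N%:R * t - d%:R) + e).
have Pm : forall d δ δ', 0 < δ' -> δ' <= δ -> P d δ -> P d δ'.
  by move=> d δ δ' _ h1 HP u hu1 hu2; apply: HP hu1 _; apply: lt_le_trans hu2 _; rewrite lerD2l.
have [δ δ0 Hδ] := @fin_delta P N Pm (fun d _ => rg _ e e0).
exists (δ / N%:R); first by rewrite divr_gt0.
move=> s ts st; rewrite -TopD; apply: Top_le2 => d _.
apply: Hδ => //; first by rewrite lerD2r ler_wpM2l ?ler0n.
have : N%:R * s < N%:R * (t + δ / N%:R) by rewrite ltr_pM2l.
rewrite mulrDr [N%:R * (_ / _)]mulrC divfK ?gt_eqF // => h.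
by rewrite addrAC ltrD2r.
Qed.

Definition F0 (t : R) : R := if 0 <= t then 1 else 0.
Definition Fn (n : nat) : R -> R := iter n Top F0.

Lemma Top_nd g : (forall s t, s <= t -> g s <= g t) ->
  forall s t, s <= t -> Top g s <= Top g t.
Proof.
move=> gnd s t st; apply: Top_le2 => d _; apply: gnd.
by rewrite lerD2r ler_wpM2l ?ler0n.
Qed.

Lemma Fn_props n :
  [/\ (forall s t, s <= t -> Fn n s <= Fn n t),
      (forall t, 0 <= Fn n t <= 1),
      (forall t, t < 0 -> Fn n t = 0),
      (forall t, 1 <= t -> Fn n t = 1) & RC (Fn n)].
Proof.
elim: n => [|n [nd01 r01 neg pos rc]].
  split => /=; rewrite /F0.
  - move=> s t st; case: ifP => h1; case: ifP => h2 //.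
      by move: h2; rewrite (le_trans h1 st).
  - by move=> t; case: ifP; rewrite lexx ?ler01.
  - by move=> t t0; rewrite leNgt t0.
  - by move=> t t1; rewrite (le_trans ler01 t1).
  - move=> t e e0; case: (boolP (0 <= t)) => t0.
      exists 1 => // s ts _; rewrite (le_trans t0 ts) lerDl ltW //.
    exists (- t); first by rewrite oppr_gt0 ltNge.
    by move=> s _ st; rewrite addrN ltNge in st; rewrite (negbTE st) addrC lerDr ltW.
have Fe : Fn n.+1 = Top (Fn n) by [].
split; rewrite Fe.
- exact: Top_nd.
- move=> t; apply/andP; split.
    by apply: Top_ge_pt => d _; case/andP: (r01 (N%:R * t - d%:R)).
  by apply: Top_le_pt => d _; case/andP: (r01 (N%:R * t - d%:R)).
- move=> t t0; apply/eqP; rewrite eq_le; apply/andP; split.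
    apply: Top_le_pt => d _; rewrite neg ?lexx //.
    have : N%:R * t < 0 by rewrite pmulr_rlt0 // ltr0n N_gt0.
    have : 0 <= d%:R :> R by rewrite ler0n.
    lra.
  by apply: Top_ge_pt => d _; case/andP: (r01 (N%:R * t - d%:R)).
- move=> t t1; apply/eqP; rewrite eq_le; apply/andP; split.
    by apply: Top_le_pt => d _; case/andP: (r01 (N%:R * t - d%:R)).
  apply: Top_ge_pt => d _; rewrite pos ?lexx //.
  have : (d.+1 <= N)%N by [].
  rewrite -(ler_nat R) -addn1 natrD => h.
  have : N%:R * 1 <= N%:R * t :> R by rewrite ler_wpM2l ?ler0n.
  lra.
- exact: Top_RC.
Qed.

Lemma Fn_decr n t : Fn n.+1 t <= Fn n t.
Proof.
elim: n t => [|n IH] t.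
  have [_ r01 neg _ _] := Fn_props 1.
  rewrite /=; case: (boolP (0 <= t)) => t0.
    by rewrite {2}/F0 t0; case/andP: (r01 t).
  by rewrite {2}/F0 (negbTE t0) -[Top F0 t]/(Fn 1 t) neg // ltNge.
by apply: Top_mono => s; apply: IH.
Qed.

Lemma Fn_decr_le m n t : (m <= n)%N -> Fn n t <= Fn m t.
Proof.
move/subnKC <-; elim: (n - m)%N => [|k IH]; first by rewrite addn0.
by rewrite addnS; apply: le_trans (Fn_decr _ _) IH.
Qed.

Definition Flim (t : R) : R := inf (range (fun n => Fn n t)).

Lemma Flim_lb t : has_lbound (range (fun n => Fn n t)).
Proof.
exists 0 => _ [n _ <-]; have [_ r01 _ _ _] := Fn_props n; by case/andP: (r01 t).
Qed.

Lemma Flim_le n t : Flim t <= Fn n t.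
Proof. by apply: (ge_inf (Flim_lb t)); exists n. Qed.

Lemma Flim_ge c t : (forall n, c <= Fn n t) -> c <= Flim t.
Proof.
move=> H; apply: lb_le_inf; first by exists (Fn 0 t), 0%N.
by move=> _ [n _ <-].
Qed.

Lemma Flim_adh t e : 0 < e -> exists n, Fn n t < Flim t + e.
Proof.
move=> e0; have [_ [n _ <-] h] := inf_adherent e0 (conj (ex_intro _ (Fn 0 t) (ex_intro2 _ _ 0%N I erefl)) (Flim_lb t)).
by exists n.
Qed.

Lemma Flim_fix t : Flim t = Top Flim t.
Proof.
apply/eqP; rewrite eq_le; apply/andP; split; last first.
  apply: Flim_ge => n; apply: le_trans (Fn_decr n t).
  by apply: Top_mono => s; apply: Flim_le.
suff H : forall e, 0 < e -> Flim t <= Top Flim t + e.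
  apply/negPn/negP; rewrite -ltNge => lt.
  have := H ((Flim t - Top Flim t) / 2); lra.
move=> e e0.
have [m Hm] := @fin_exists_mono
  (fun d m => Fn m (N%:R * t - d%:R) <= Flim (N%:R * t - d%:R) + e) N
  (fun d m m' mm' P => le_trans (Fn_decr_le _ _ _ mm') P)
  (fun d _ => let: ex_intro n h := @Flim_adh (N%:R * t - d%:R) e e0 in ex_intro _ n (ltW h)).
apply: le_trans (Flim_le m.+1 t) _.
rewrite -TopD; apply: Top_le2 => d _; exact: Hm.
Qed.

Lemma Flim_nd s t : s <= t -> Flim s <= Flim t.
Proof.
move=> st; apply: Flim_ge => n; apply: le_trans (Flim_le n s) _.
by have [nd _ _ _ _] := Fn_props n; apply: nd.
Qed.

Lemma Flim_neg t : t < 0 -> Flim t = 0.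
Proof.
move=> t0; apply/eqP; rewrite eq_le; apply/andP; split.
  by have [_ _ neg _ _] := Fn_props 0; rewrite -(neg t t0); apply: Flim_le.
by apply: Flim_ge => n; have [_ r01 _ _ _] := Fn_props n; case/andP: (r01 t).
Qed.

Lemma Flim_pos t : 1 <= t -> Flim t = 1.
Proof.
move=> t1; apply/eqP; rewrite eq_le; apply/andP; split.
  by have [_ _ _ pos _] := Fn_props 0; rewrite -(pos t t1); apply: Flim_le.
by apply: Flim_ge => n; have [_ _ _ pos _] := Fn_props n; rewrite pos.
Qed.

Lemma Flim_RC : RC Flim.
Proof.
move=> t e e0.
have e2 : 0 < e / 2 by rewrite divr_gt0.
have [n hn] := @Flim_adh t _ e2.
have [_ _ _ _ rc] := Fn_props n.
have [δ δ0 Hδ] := rc t _ e2.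
exists δ => // s ts st.
apply: le_trans (Flim_le n s) _; have := Hδ s ts st; lra.
Qed.

End Tops.

End PB.
Import PB.

Module PM.
Import numFieldNormedType.Exports.
Local Open Scope classical_set_scope.
Local Open Scope ring_scope.

Lemma mphi (R : realType) N (d : nat) :
  measurable_fun setT (@phi R N d : measurableTypeR R -> measurableTypeR R).
Proof.
rewrite /phi.
apply: (@measurable_realfun.measurable_funM _ (measurableTypeR R) R setT (fun x => x + d%:R) (fun _ => N%:R^-1)).
  by apply: (@measurable_realfun.measurable_funD _ (measurableTypeR R) R setT id (fun _ => d%:R)).
done.
Qed.

Definition Fcum (R : realType) (N : nat) (b : nat -> bool)
  (W2 : (2 <= \sum_(d < N) b d)%N) : R -> R := Flim R N b.

Section Meas.
Context (R : realType) (N : nat) (b : nat -> bool)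
  (W2 : (2 <= \sum_(d < N) b d)%N).

Local Notation F := (@Fcum R N b W2).

Let F_nd : nondecreasing F.
Proof. by move=> s t st; apply: Flim_nd. Qed.

Let F_rc : right_continuous F.
Proof.
move=> x; apply/cvgrPdist_lt => e e0.
have [δ δ0 Hδ] := @Flim_RC R N b W2 x (e / 2) (divr_gt0 e0 (ltr0n R 2)).
near=> y.
have xy : x < y by near: y; exact: nbhs_right_gt.
have yd : y < x + δ by near: y; apply: nbhs_right_lt; rewrite ltrDl.
have h1 := Hδ y (ltW xy) yd.
have h2 : F x <= F y by apply: F_nd; apply: ltW.
rewrite /F /Fcum in h2 *.
rewrite ler0_norm; last by rewrite subr_le0.
lra.
Unshelve. all: by end_near.
Qed.

HB.instance Definition _ := isCumulative.Build R _ R F F_nd F_rc.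

Let F_Ny : F @ -oo --> (0:R).
Proof.
apply: cvg_near_cst; near=> t; apply: (@Flim_neg R N b W2).
by near: t; apply: (@nbhs_ninfty_lt R 0); rewrite num_real.
Unshelve. all: by end_near. Qed.

Let F_y : F @ +oo --> (1:R).
Proof.
apply: cvg_near_cst; near=> t; apply: (@Flim_pos R N b W2).
by near: t; apply: nbhs_pinfty_ge.
Unshelve. all: by end_near.
Qed.

HB.instance Definition _ := isCumulativeBounded.Build R 0 1 F F_Ny F_y.


Local Notation W := (\sum_(d < N) b d)%N.
Local Notation LS := (lebesgue_stieltjes_measure F).

Definition muP : set R -> \bar R := lebesgue_stieltjes_measure F.

HB.instance Definition _ := @isMeasure.Build _ R R muP
  (measure0 LS) (measure_ge0 LS) (@measure_semi_sigma_additive _ _ _ LS).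

HB.instance Definition _ := @Measure_isProbability.Build _ R R muP
  (probability_setT LS).

Definition pf (d : nat) (A : set (measurableTypeR R)) : \bar R :=
  LS (@phi R N d @^-1` A).

Let pf0 d : pf d set0 = 0.
Proof. by rewrite /pf preimage_set0 measure0. Qed.

Let pf_ge0 d A : (0 <= pf d A)%E.
Proof. exact: measure_ge0. Qed.

Let pf_sigma d : semi_sigma_additive (pf d).
Proof.
move=> G mG tG mUG; rewrite /pf preimage_bigcup.
apply: measure_semi_sigma_additive.
- by move=> n; rewrite -[X in measurable X]setTI; exact: mphi.
- apply/trivIsetP => /= i j _ _ ij; rewrite -preimage_setI.
  by move/trivIsetP : tG => /(_ _ _ _ _ ij) ->//; rewrite preimage_set0.
- by rewrite -preimage_bigcup -[X in measurable X]setTI; exact: mphi.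
Qed.

HB.instance Definition _ d := isMeasure.Build _ _ _ (pf d) (pf0 d) (pf_ge0 d) (pf_sigma d).

Definition nu := mscale (W%:R^-1)%:nng
  (msum (fun d => if b d then (pf d : {measure set (measurableTypeR R) -> \bar R}) else mzero) N).

End Meas.

Section SS.
Context (R : realType) (N : nat) (b : nat -> bool)
  (W2 : (2 <= \sum_(d < N) b d)%N).
Local Notation F := (@Fcum R N b W2).
Local Notation W := (\sum_(d < N) b d)%N.
Local Notation LS := (lebesgue_stieltjes_measure F).

Lemma Npos : (0 < N)%N.
Proof. exact: (@N_gt0 N b W2). Qed.

Lemma phi_pre_oc d a c :
  @phi R N d @^-1` `]a, c] = `]N%:R * a - d%:R, N%:R * c - d%:R]%classic.
Proof.
have N0 : 0 < N%:R :> R by rewrite ltr0n Npos.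
apply/seteqP; split => x /=; rewrite !in_itv /= /phi => /andP [h1 h2]; apply/andP; split.
- by move: h1; rewrite ltr_pdivlMr // mulrC => h; lra.
- by move: h2; rewrite ler_pdivrMr // mulrC => h; lra.
- by rewrite ltr_pdivlMr // mulrC; lra.
- by rewrite ler_pdivrMr // mulrC; lra.
Qed.

Lemma phi_pre_Nyc d c :
  @phi R N d @^-1` `]-oo, c] = `]-oo, N%:R * c - d%:R]%classic.
Proof.
have N0 : 0 < N%:R :> R by rewrite ltr0n Npos.
apply/seteqP; split => x /=; rewrite !in_itv /= /phi => h.
- by move: h; rewrite ler_pdivrMr // mulrC => h; lra.
- by rewrite ler_pdivrMr // mulrC; lra.
Qed.

Lemma LS_oc u v : u <= v -> LS `]u, v] = (F v - F u)%:E.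
Proof.
move=> uv; rewrite /lebesgue_stieltjes_measure /measure_extension /=.
rewrite measurable_mu_extE /= ?wlength_itv_bnd ?EFinB //; exact: is_ocitv.
Qed.

Lemma LS_nu A : measurable A -> LS A = @nu R N b W2 A.
Proof.
apply: lebesgue_stieltjes_measure_unique => X [[a c] _ <-] /=.
case: (leP a c) => ac; last first.
  by rewrite set_itv_ge ?measure0 // bnd_simp -leNgt ltW.
rewrite LS_oc //. rewrite /nu /mscale /=. unfold msum.
rewrite (eq_bigr (fun k : 'I_N => ((b k)%:R * (F (N%:R * c - k%:R) - F (N%:R * a - k%:R)))%:E)); last first.
  move=> k _; case: (b k); rewrite /reverse_coercion /=; last by rewrite mul0r.
  rewrite /pf phi_pre_oc LS_oc ?mul1r //.
  have : N%:R * a <= N%:R * c :> R by apply: ler_wpM2l => //; rewrite ler0n.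
  move=> h; lra.
rewrite sumEFin -EFinM; congr EFin.
rewrite /Fcum [Flim _ _ _ c]Flim_fix // [Flim _ _ _ a]Flim_fix // /Top -mulrBr -sumrB.
by congr (_ * _); apply: eq_bigr => k _; rewrite mulrBr.
Qed.

Lemma muP_ss : self_similar (fun i : 'I_N => b i) (@muP R N b W2).
Proof.
move=> A mA; rewrite /muP; apply: (eq_trans (@LS_nu A mA)); rewrite /nu /mscale /=; unfold msum; rewrite [in RHS]big_mkcond /=.
congr (_ * _)%E; apply: eq_bigr => k _; case: (b k) => //.
Qed.

End SS.

End PM.
Import PM.

Module PU.
Import numFieldNormedType.Exports.
Local Open Scope ring_scope.
Local Open Scope classical_set_scope.

Section U.
Context (R : realType) (N : nat) (b : nat -> bool)
  (W2 : (2 <= \sum_(d < N) b d)%N).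
Local Notation W := (\sum_(d < N) b d)%N.
Variable mu : probability R R.
Hypothesis hss : self_similar (fun i : 'I_N => b i) mu.

Let muE (X : set R) : measurable X -> mu X = (fine (mu X))%:E.
Proof. by move=> mX; rewrite fineK // fin_num_measure. Qed.

Let g (t : R) : R := fine (mu `]-oo, t]).

Let gE t : mu `]-oo, t] = (g t)%:E.
Proof. by rewrite muE. Qed.

Let hg t : g t = Top R N b g t.
Proof.
have := hss `]-oo, t] (measurable_itv _).
rewrite gE.
under eq_bigr do rewrite (@phi_pre_Nyc R N b W2) gE.
rewrite sumEFin -EFinM; move=> H; have := congr1 fine H; rewrite /= => ->.
rewrite /Top /digit_weight; congr (_ * _).
rewrite big_mkcond /=; apply: eq_bigr => k _; case: (b k).
  by rewrite mul1r.
by rewrite mul0r.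
Qed.

Let g0 t : 0 <= g t.
Proof. by rewrite /g fine_ge0. Qed.

Let g1 t : g t <= 1.
Proof. by rewrite -lee_fin -gE probability_le1. Qed.

Let gnd s t : s <= t -> g s <= g t.
Proof.
move=> st; rewrite -lee_fin -!gE; apply: le_measure; rewrite ?inE //.
by apply: subitvPr; rewrite bnd_simp.
Qed.

Let glo e : 0 < e -> exists n : nat, g (- n%:R) <= e.
Proof.
move=> e0; case: (pselect (exists n : nat, g (- n%:R) <= e)) => // Hn.
have H : forall n : nat, (e%:E <= mu `]-oo, (- n%:R)%R])%E.
  move=> n; rewrite gE lee_fin; apply: ltW; rewrite ltNge; apply/negP => h.
  by apply: Hn; exists n.
pose F n : set R := `]-oo, (- n%:R)].
have cv : (mu \o F) n @[n --> \oo] --> mu (\bigcap_n F n).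
  apply: nonincreasing_cvg_mu => //.
  - by apply: (le_lt_trans (probability_le1 mu _)); [rewrite /F; exact: measurable_itv | exact: ltry].
  - by move=> i; exact: measurable_itv.
  - by apply: bigcapT_measurable => i; exact: measurable_itv.
  - move=> m n mn; apply/subsetPset => x/=; rewrite /F /= !in_itv /= => /le_trans; apply.
    by rewrite lerN2 ler_nat.
have E0 : \bigcap_n F n = set0.
  rewrite -subset0 => t /(_ (Num.bound (- t)) I).
  rewrite /F/= in_itv/= => h.
  have := unstable.ltr_bound (- t); lra.
rewrite E0 measure0 in cv.
have Hn' : \forall n \near \oo, (e%:E <= (mu \o F) n)%E by apply: nearW.
have := lime_ge (cvgP _ cv) Hn'.
rewrite (cvg_lim _ cv) // lee_fin => /(_ _); lra.
Qed.

Let ghi e : 0 < e -> exists n : nat, 1 - e <= g n%:R.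
Proof.
move=> e0; case: (pselect (exists n : nat, 1 - e <= g n%:R)) => // Hn.
have H : forall n : nat, (mu `]-oo, n%:R] <= (1 - e)%:E)%E.
  move=> n; rewrite gE lee_fin; apply: ltW; rewrite ltNge; apply/negP => h.
  by apply: Hn; exists n.
pose F n : set R := `]-oo, n%:R].
have cv : (mu \o F) n @[n --> \oo] --> mu (\bigcup_n F n).
  apply: nondecreasing_cvg_mu.
  - by move=> i; exact: measurable_itv.
  - by apply: bigcupT_measurable => i; exact: measurable_itv.
  - move=> m n mn; apply/subsetPset => x/=; rewrite /F /= !in_itv/= => /le_trans; apply.
    by rewrite ler_nat.
have E0 : \bigcup_n F n = setT.
  rewrite -subTset => t _ /=; exists (Num.bound t) => //.
  rewrite /F /= in_itv /=; exact: ltW (unstable.ltr_bound t) .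
rewrite E0 probability_setT in cv.
have Hn' : \forall n \near \oo, ((mu \o F) n <= (1 - e)%:E)%E by apply: nearW.
have := lime_le (cvgP _ cv) Hn'.
rewrite (cvg_lim _ cv) // lee_fin => /(_ _); lra.
Qed.

Lemma cdf_vals a : (a <= N)%N ->
  cdfB mu (a%:R / N%:R) = ((\sum_(d < a) b d)%N%:R / W%:R)%:E.
Proof.
move=> aN.
have Hv := @g_vals R N b W2 g hg g0 g1 gnd glo ghi a aN.
have Hz := @g_zero R N b W2 g hg g0 gnd glo.
have x0 : 0 <= a%:R / N%:R :> R by rewrite divr_ge0 ?ler0n.
have U : `]-oo, a%:R / N%:R] = `]-oo, 0[ `|` `[0, a%:R / N%:R] :> set R.
  apply/seteqP; split => t /=; rewrite !in_itv /=.
    by move=> h; case: (ltP t 0) => ht; [left|right; apply/andP; split].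
  by case => [h|/andP [_ h]] //; apply: ltW; apply: lt_le_trans h x0.
have I : `]-oo, 0[ `&` `[0, a%:R / N%:R] = set0 :> set R.
  apply/seteqP; split => t //=; rewrite !in_itv /= => -[h1 /andP [h2 _]]; lra.
have M0 : mu `]-oo, 0[ = 0%E.
  apply/eqP; rewrite eq_le measure_ge0 andbT.
  apply: (@le_trans _ _ (mu `]-oo, 0])); last by rewrite gE Hz.
  by apply: le_measure; rewrite ?inE //; apply: subitvPr; rewrite bnd_simp.
have := gE (a%:R / N%:R); rewrite U measureU // Hv. rewrite [X in (X + _)%E]M0. rewrite add0e => H.
by rewrite /cdfB H.
Qed.

End U.

End PU.
Import PU.

Module PC.

Lemma count_lt (Q c : nat) : (c <= Q)%N -> (\sum_(r < Q) (r < c)%N)%N = c.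
Proof.
move=> cQ.
rewrite -(big_mkcond (fun r : 'I_Q => (r < c)%N) (fun _ => 1%N)) /=.
rewrite -(big_ord_widen Q (fun _ => 1%N) cQ) /=.
by rewrite sum_nat_const card_ord muln1.
Qed.

Lemma comb (k Q : nat) (p q : 'I_k -> nat) : (2 <= Q)%N ->
  (forall n, 0 < p n < Q)%N -> (forall n, q n < Q)%N ->
  (forall m n, p m <= p n -> q m <= q n)%N ->
  exists b : nat -> bool, (\sum_(d < Q * Q) b d = Q)%N /\
    forall n, (\sum_(d < p n * Q) b d = q n)%N.
Proof.
move=> Q2 hp hq hm.
pose h j := if (j < Q)%N then (\max_(n : 'I_k | p n <= j) q n)%N else Q.
have hle j : (h j <= Q)%N.
  rewrite /h; case: ifP => // _; apply/bigmax_leqP => n _; exact: ltnW.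
have hnd i j : (i <= j)%N -> (h i <= h j)%N.
  move=> ij; rewrite /h; case: ifP => iQ; case: ifP => jQ.
  - apply/bigmax_leqP => n hn; apply: leq_bigmax_cond; exact: leq_trans hn ij.
  - apply/bigmax_leqP => n _; exact: ltnW.
  - by move: iQ; rewrite (leq_ltn_trans ij jQ).
  - by [].
have h0 : h 0%N = 0%N.
  rewrite /h ifT; last by lia.
  apply/eqP; rewrite -leqn0; apply/bigmax_leqP => n hn.
  by have := hp n; lia.
have hQ : h Q = Q by rewrite /h ltnn.
have hpn n : h (p n) = q n.
  rewrite /h ifT; last by have := hp n; lia.
  apply/eqP; rewrite eqn_leq; apply/andP; split.
    by apply/bigmax_leqP => m hmn; apply: hm.
  by apply: leq_bigmax_cond.
pose b d := (d %% Q < h (d %/ Q).+1 - h (d %/ Q))%N.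
have Hs j : (\sum_(d < j * Q) b d)%N = h j.
  elim: j => [|j IH]; first by rewrite mul0n big_ord0 h0.
  rewrite mulSn addnC big_split_ord /= IH.
  have -> : (\sum_(i < Q) b (j * Q + i)%N)%N = (h j.+1 - h j)%N.
    rewrite -(@count_lt Q (h j.+1 - h j)%N); last first.
      by have := hle j.+1; lia.
    apply: eq_bigr => i _; rewrite /b.
    have iQ := ltn_ord i.
    have -> : ((j * Q + i) %/ Q = j)%N.
      by rewrite divnDl ?dvdn_mull // mulnK ?divn_small ?addn0 //; lia.
    have -> : ((j * Q + i) %% Q = i)%N.
      by rewrite modnMDl modn_small.
    by [].
  by have := hnd j j.+1 (leqnSn j); lia.
exists b; split; first by rewrite Hs hQ.
by move=> n; rewrite Hs hpn.
Qed.

End PC.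
Import PC.

Local Open Scope ring_scope.


Lemma frac_nat (Q : nat) (r : rat) : (0 < Q)%N -> (`|denq r| %| Q)%N -> 0 < r < 1 ->
  exists p : nat, (0 < p < Q)%N /\ r = p%:R / Q%:R.
Proof.
move=> Q0 hd /andP [r0 r1].
set m := (Q %/ `|denq r|)%N.
have hQ : Q = (m * `|denq r|)%N by rewrite divnK.
have m0 : (0 < m)%N by move: Q0; rewrite hQ muln_gt0 => /andP [].
have n0 : 0 < numq r by rewrite numq_gt0.
exists (`|numq r| * m)%N.
have E : r = (`|numq r| * m)%N%:R / Q%:R :> rat.
  rewrite [in RHS]hQ !natrM !natr_absz !gtr0_norm ?denq_gt0 //.
  rewrite -{1}(divq_num_den r).
  have : m%:R != 0 :> rat by rewrite pnatr_eq0 -lt0n.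
  have : (denq r)%:~R != 0 :> rat by rewrite intr_eq0 denq_eq0.
  move=> h1 h2; field; by rewrite h1 h2.
split => //.
have Qr : 0 < Q%:R :> rat by rewrite ltr0n.
have E' : r * Q%:R = (`|numq r| * m)%N%:R by rewrite {1}E divfK // gt_eqF.
apply/andP; split.
  rewrite -(ltr0n rat) -E'; exact: mulr_gt0.
rewrite -(ltr_nat rat) -E'; nra.
Qed.

Lemma ratr_frac (R : realType) (p Q : nat) : ratr (p%:R / Q%:R : rat) = p%:R / Q%:R :> R.
Proof. by rewrite fmorph_div !rmorph_nat. Qed.

Theorem proposition2p4 (R : realType) (k : nat) (x y : 'I_k -> rat)
  (hx : forall n, 0 < x n < 1) (hy : forall n, 0 < y n < 1)
  (hinj : forall m n, m != n -> x m != x n)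
  (hmono : forall m n, x n <= x m -> y n <= y m) :
  exists (N : nat) (B : 'I_N -> bool),
    is_binary_digit_vector B /\
    (exists mu : probability R R, self_similar B mu) /\
    (forall mu : probability R R, self_similar B mu ->
       forall n, cdfB mu (ratr (x n)) = (ratr (y n) : R)%:E).
Proof.
pose Q : nat := (2 * \prod_(n < k) (`|denq (x n)| * `|denq (y n)|))%N.
have Q2 : (2 <= Q)%N.
  rewrite /Q -[X in (X <= _)%N]muln1 leq_mul2l /=; apply: prodn_gt0 => n.
  by rewrite muln_gt0 !absz_gt0 !denq_neq0.
have Q0 : (0 < Q)%N by lia.
have dv n : (`|denq (x n)| %| Q)%N /\ (`|denq (y n)| %| Q)%N.
  rewrite /Q (bigD1 n) //=; split; apply: dvdn_mull; apply: dvdn_mulr.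
    exact: dvdn_mulr.
  exact: dvdn_mull.
clearbody Q.
have [p hp] := choice (fun n => @frac_nat Q (x n) Q0 (dv n).1 (hx n)).
have [q hq] := choice (fun n => @frac_nat Q (y n) Q0 (dv n).2 (hy n)).
have Qr : 0 < Q%:R :> rat by rewrite ltr0n.
have hm : forall m n, (p m <= p n)%N -> (q m <= q n)%N.
  move=> m n pmn.
  have : x m <= x n.
    by rewrite (hp m).2 (hp n).2 ler_pM2r ?invr_gt0 // ler_nat.
  move/hmono; rewrite (hq m).2 (hq n).2 ler_pM2r ?invr_gt0 // ler_nat //.
have [b [bW bc]] := @comb k Q p q Q2 (fun n => (hp n).1)
  (fun n => proj2 (elimT andP (hq n).1)) hm.
have W2 : (2 <= \sum_(d < Q * Q) b d)%N by rewrite bW.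
exists (Q * Q)%N, (fun i : 'I_(Q * Q) => b i).
split.
  rewrite /is_binary_digit_vector /digit_weight bW.
  apply/andP; split; first by nia.
  apply/andP; split => //; nia.
split.
  by exists (@muP R (Q * Q) b W2); exact: muP_ss.
move=> mu hss n.
have pQ : (p n * Q <= Q * Q)%N by rewrite leq_mul2r; have := (hp n).1; lia.
rewrite (hp n).2 (hq n).2 !ratr_frac.
have -> : (p n)%:R / Q%:R = (p n * Q)%N%:R / (Q * Q)%N%:R :> R.
  by rewrite !natrM -mulf_div divff ?mulr1 // pnatr_eq0 -lt0n.
by have := (@cdf_vals R (Q * Q) b W2 mu hss _ pQ); rewrite bc bW.
Qed.
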